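(* Let $\mathbf x=(k,S,\Lambda,\mathbf a)$ be an abelian group $k$-parameter and $G=G_{\mathbf x}$. (1) If $U\subseteq{}^\omega S$, $u\subseteq{}^\omega S\setminus U$ is finite, $j\le k$, $|u|\le j$ and $|U|\le\aleph_{k-j}$, then the abelian group $G_{U\cup u}/G_{U,u}$ is free. (2) If $U\subseteq{}^\omega S$ and $|U|\le\aleph_k$, then $G_U$ is free.
   Context: For a set $S$, ${}^\omega S$ is the set of all functions $\omega\to S$. An abelian group $k$-parameter is $\mathbf x=(k,S,\Lambda,\mathbf a)$ with $k<\omega$, $S$ a set, $\Lambda\subseteq {}^{k+1}({}^\omega S)$ (sequences $\bar\eta=\langle\eta_0,\dots,\eta_k\rangle$, $\eta_\ell\in{}^\omega S$) and $\mathbf a:\Lambda\times\omega\to\mathbb Z$, $\mathbf a_{\bar\eta,n}=\mathbf a(\bar\eta,n)$. For $\bar\eta\in\Lambda$, $m\le k$, $n<\omega$, $\bar\eta\upharpoonleft\langle m,n\rangle$ is the sequence obtained from $\bar\eta$ by replacing $\eta_m$ with $\eta_m\restriction n$. $\Lambda_m=\{\bar\eta\upharpoonleft\langle m,n\rangle:\bar\eta\in\Lambda,n<\omega\}$, $\Lambda_{\le k}=\bigcup_{m\le k}\Lambda_m$. $G_{\mathbf x}$ is the abelian group generated by $z$, $x_{\bar\nu}$ ($\bar\nu\in\Lambda_{\le k}$), $y_{\bar\eta,n}$ ($\bar\eta\in\Lambda,n<\omega$) freely except for the relations $(n!)y_{\bar\eta,n+1}=y_{\bar\eta,n}+\mathbf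 a_{\bar\eta,n}z+\sum_{m\le k}x_{\bar\eta\upharpoonleft\langle m,n\rangle}$ ($\bar\eta\in\Lambda$, $n<\omega$). For $U\subseteq{}^\omega S$, $G_U$ is the subgroup of $G_{\mathbf x}$ generated by $\{z\}\cup\{y_{\bar\eta,n}:\bar\eta\in\Lambda\cap{}^{k+1}U,n<\omega\}\cup\{x_{\bar\eta\upharpoonleft\langle m,n\rangle}:\bar\eta\in\Lambda\cap{}^{k+1}U,m\le k,n<\omega\}$. For $U\subseteq{}^\omega S$ and finite $u\subseteq{}^\omega S$, $G_{U,u}$ is the subgroup of $G_{\mathbf x}$ generated by $\bigcup_{\eta\in u}G_{U\cup(u\setminus\{\eta\})}$ (so $G_{U,\emptyset}=\{0\}$). *)

(* Defs.v *)
From mathcomp Require Import all_boot all_algebra.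
From Stdlib Require Import ClassicalDescription.

Set Implicit Arguments.
Unset Strict Implicit.
Unset Printing Implicit Defensive.

Import GRing.Theory.
Local Open Scope ring_scope.

Definition well_order_on (T : Type) (X : T -> Prop) (R : T -> T -> Prop) : Prop :=
  (forall x, X x -> ~ R x x) /\
  (forall x y z, X x -> X y -> X z -> R x y -> R y z -> R x z) /\
  (forall x y, X x -> X y -> x = y \/ R x y \/ R y x) /\
  (forall Y : T -> Prop, (forall y, Y y -> X y) -> (exists y, Y y) ->
     exists m, Y m /\ forall y, Y y -> ~ R y m).

(* |X| <= aleph_0  iff X injects into omega;
   |X| <= aleph_(n+1) iff X injects into omega_(n+1), i.e. X carries a
   well-ordering all of whose proper initial segments have size <= aleph_n. *)
Fixpoint card_le_aleph (n : nat) (T : Type) (X : T -> Prop) {struct n} : Prop :=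
  match n with
  | 0 => exists f : T -> nat, forall x y, X x -> X y -> f x = f y -> x = y
  | n'.+1 => exists R : T -> T -> Prop, well_order_on X R /\
               forall x, X x -> card_le_aleph n' (fun y => X y /\ R y x)
  end.

Definition wseq (k : nat) (S : Type) := 'I_k.+1 -> nat -> S.

(* Tuples in which each coordinate is either a finite or an omega-sequence;
   Lambda_{<=k} consists of such tuples. *)
Definition mseq (k : nat) (S : Type) := 'I_k.+1 -> (seq S + (nat -> S))%type.

Definition restr (k : nat) (S : Type) (eta : wseq k S) (m : 'I_k.+1) (n : nat)
  : mseq k S :=
  fun l => if l == m then inl (mkseq (eta m) n) else inr (eta l).

Inductive gen (k : nat) (S : Type) : Type :=
| gz : gen k S
| gx : mseq k S -> gen k S
| gy : wseq k S -> nat -> gen k S.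

(* Formal Z-combinations of generator symbols (the free abelian group on the
   generators sits inside this as the finitely supported functions). *)
Definition vect (k : nat) (S : Type) := gen k S -> int.

Definition delta (k : nat) (S : Type) (g : gen k S) : vect k S :=
  fun g' => if excluded_middle_informative (g' = g) then 1 else 0.

Definition span (k : nat) (S : Type) (P : vect k S -> Prop) (v : vect k S) : Prop :=
  exists l : seq (int * vect k S),
    (forall p, List.In p l -> P p.2) /\
    v = (fun g => \sum_(p <- l) p.1 * p.2 g).

Section Param.
Variables (k : nat) (S : Type) (Lam : wseq k S -> Prop) (a : wseq k S -> nat -> int).

(* The defining relation (n!) y_{eta,n+1} = y_{eta,n} + a_{eta,n} z
   + sum_{m<=k} x_{eta |` <m,n>}, written as a vector that must vanish. *)
Definition relv (eta : wseq k S) (n : nat) : vect k S :=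
  fun g => (n`!)%:Z * delta (gy eta n.+1) g - delta (gy eta n) g
           - a eta n * delta (gz k S) g
           - \sum_(m < k.+1) delta (gx (restr eta m n)) g.

Definition relvecs (v : vect k S) : Prop :=
  exists eta n, Lam eta /\ v = relv eta n.

(* The preimage, in the free abelian group, of the subgroup of
   G_x = F / <relations> generated by (the images of) the vectors in P.
   Thus the subgroup of G_x generated by P is  Gsub P / Gsub (fun _ => False). *)
Definition Gsub (P : vect k S -> Prop) : vect k S -> Prop :=
  span (fun v => P v \/ relvecs v).

Definition gensU (U : (nat -> S) -> Prop) (v : vect k S) : Prop :=
  v = delta (gz k S) \/
  (exists eta n, Lam eta /\ (forall l, U (eta l)) /\ v = delta (gy eta n)) \/
  (exists eta m n, Lam eta /\ (forall l, U (eta l)) /\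
                   v = delta (gx (restr eta m n))).

Definition gensUu (U : (nat -> S) -> Prop) (u : seq (nat -> S)) (v : vect k S) : Prop :=
  exists eta, List.In eta u /\
    gensU (fun nu => U nu \/ (List.In nu u /\ nu <> eta)) v.

End Param.

(* For subgroups H2 <= H1 of the group of vectors, the quotient H1 / H2 is a
   free abelian group: it has a basis (b_i + H2)_{i in I}. *)
Definition free_quot (k : nat) (S : Type) (H1 H2 : vect k S -> Prop) : Prop :=
  exists (I : Type) (b : I -> vect k S),
    (forall i, H1 (b i)) /\
    (forall v, H1 v -> exists l : seq (int * I),
        H2 (fun g => v g - \sum_(p <- l) p.1 * b p.2 g)) /\
    (forall l : seq (int * I), List.NoDup (map snd l) ->
        H2 (fun g => \sum_(p <- l) p.1 * b p.2 g) ->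
        forall p, List.In p l -> p.1 = 0).

(* Main.v *)
Require Import Defs.
From mathcomp Require Import all_boot all_algebra.
From Stdlib Require Import ClassicalDescription Classical FunctionalExtensionality ProofIrrelevance IndefiniteDescription.
From mathcomp Require Import ring.
Import Defs.
Set Implicit Arguments.
Unset Strict Implicit.
Unset Printing Implicit Defensive.
Import GRing.Theory.
Local Open Scope ring_scope.

Definition pb (P : Prop) : bool := if excluded_middle_informative P then true else false.
Lemma pbP (P : Prop) : reflect P (pb P).
Proof. rewrite /pb; case: excluded_middle_informative => H; constructor; auto. Qed.

Section Span.
Variables (k : nat) (S : Type).
Implicit Types (P Q : vect k S -> Prop) (v w : vect k S).

Lemma span_ext P Q v : (forall w, P w -> Q w) -> span P v -> span Q v.
Proof. move=> PQ [l [Hl ->]]; exists l; split=> // p /Hl; exact: PQ. Qed.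

Lemma span0 P : span P (fun _ => 0).
Proof. exists [::]; split=> //; apply: functional_extensionality => g; by rewrite big_nil. Qed.

Lemma span_gen P v : P v -> span P v.
Proof.
move=> Pv; exists [:: (1, v)]; split; first by move=> p [<-|].
apply: functional_extensionality => g; by rewrite big_cons big_nil addr0 mul1r.
Qed.

Lemma spanD P v w : span P v -> span P w -> span P (fun g => v g + w g).
Proof.
move=> [l1 [H1 ->]] [l2 [H2 ->]]; exists (l1 ++ l2); split.
  move=> p Hp; case: (List.in_app_or _ _ _ Hp); [exact: H1|exact: H2].
by apply: functional_extensionality => g; rewrite big_cat.
Qed.

Lemma spanZ P c v : span P v -> span P (fun g => c * v g).
Proof.
move=> [l [H ->]]; exists [seq (c * p.1, p.2) | p <- l]; split.
  move=> p Hp; case: (proj1 (List.in_map_iff _ _ _) Hp) => q [<- /H] //.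
apply: functional_extensionality => g; rewrite big_map mulr_sumr.
by apply: eq_bigr => p _; rewrite mulrA.
Qed.

Lemma spanN P v : span P v -> span P (fun g => - v g).
Proof.
move=> H; have := spanZ (-1) H.
have -> : (fun g => -1 * v g) = (fun g => - v g) by apply: functional_extensionality => g; rewrite mulN1r.
done.
Qed.

Lemma span_eq P v w : (forall g, v g = w g) -> span P v -> span P w.
Proof. by move=> E; have -> : v = w by apply: functional_extensionality. Qed.

End Span.

Local Close Scope ring_scope.

Lemma restr_inj k S (nu eta : wseq k S) m m' n n' :
  restr nu m n = restr eta m' n' ->
  m = m' /\ n = n' /\ (forall l, l != m -> nu l = eta l) /\ mkseq (nu m) n = mkseq (eta m) n.
Proof.
move=> E.
have Em := congr1 (fun f => f m) E; rewrite /restr /= eqxx in Em.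
case: eqP Em => [Emm [Es]|_ //]; subst m'.
have En : n = n' by have := congr1 size Es; rewrite !size_mkseq.
subst n'; split=> //; split=> //; split=> // l nl.
have := congr1 (fun f => f l) E; rewrite /restr /= (negbTE nl); by case.
Qed.

Lemma restr_self k S (eta : wseq k S) m m' n :
  restr eta m n = restr eta m' n -> m = m'.
Proof. by case/restr_inj. Qed.

Lemma wseq_ext k S (nu eta : wseq k S) m :
  (forall l, l != m -> nu l = eta l) -> nu m = eta m -> nu = eta.
Proof.
move=> H1 H2; apply: functional_extensionality => l.
case: (eqVneq l m) => [->//|]; exact: H1.
Qed.

Lemma sep_lemma S (L : list (nat -> S)) (e : nat -> S) :
  exists N, forall n, (N <= n)%N -> forall w, List.In w L ->
     mkseq w n = mkseq e n -> w = e.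
Proof.
elim: L => [|w L [N HN]]; first by exists 0%N.
case: (classic (w = e)) => [we|nwe].
  exists N => n Hn w' [<-|Hw] //; exact: HN.
have [i Hi] : exists i, w i <> e i.
  apply: NNPP => H; apply: nwe; apply: functional_extensionality => i.
  by apply: NNPP => H'; apply: H; exists i.
exists (maxn N i.+1) => n; rewrite geq_max => /andP [H1 H2] w' [<-|Hw].
  move=> E; exfalso; apply: Hi.
  have := congr1 (fun s => nth (w 0%N) s i) E; rewrite !nth_mkseq //.
exact: HN.
Qed.

Lemma In_mem (T : eqType) (x : T) (s : seq T) : List.In x s <-> x \in s.
Proof.
elim: s => [|y s IH] //=; rewrite in_cons; split.
  by case=> [->|/IH ->]; rewrite ?eqxx ?orbT.
by case/orP=> [/eqP ->|/IH]; auto.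
Qed.

Lemma size_length T (s : seq T) : size s = length s.
Proof. by elim: s => //= x s ->. Qed.

Lemma pigeon k T (eta : 'I_k.+1 -> T) (u : list T) :
  (size u <= k)%N -> (forall y, List.In y u -> exists l, eta l = y) ->
  exists m, forall y, List.In y u -> exists l, l != m /\ eta l = y.
Proof.
move=> Hs Hc.
case: (classic (exists m, ~ List.In (eta m) u)) => [[m Hm]|Hall].
  exists m => y Hy; case: (Hc y Hy) => l Hl; exists l; split=> //.
  by apply/eqP => E; apply: Hm; rewrite -E Hl.
have Hin : forall m, List.In (eta m) u.
  by move=> m; apply: NNPP => H; apply: Hall; exists m.
case: (classic (exists l1 l2, l1 != l2 /\ eta l1 = eta l2)) => [[l1 [l2 [Hne He]]]|Hno].
  exists l1 => y Hy; case: (Hc y Hy) => l Hl.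
  case: (eqVneq l l1) => [E|Hne']; last by exists l.
  by exists l2; split; [rewrite eq_sym|rewrite -He -E].
exfalso.
have Hidx : forall m, { i | (i < size u)%N /\ List.nth i u (eta m) = eta m }.
  move=> m; apply: constructive_indefinite_description.
  case: (List.In_nth _ _ (eta m) (Hin m)) => i [Hi Hn]; exists i; split=> //.
  by rewrite size_length; apply/ltP.
pose idx m := proj1_sig (Hidx m).
have inj : injective idx.
  move=> l1 l2 E; apply: NNPP => Hne; apply: Hno; exists l1, l2; split; first by apply/eqP.
  case: (proj2_sig (Hidx l1)) => H1 E1; case: (proj2_sig (Hidx l2)) => _ E2.
  rewrite -E1 -E2 -/(idx l1) -/(idx l2) -E.
  apply: List.nth_indep; apply/ltP; rewrite -size_length; exact: H1.
have := @uniq_leq_size _ (map idx (enum 'I_k.+1)) (seq.iota 0 (size u)).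
rewrite map_inj_uniq // enum_uniq size_map size_enum_ord size_iota => H.
have : (k.+1 <= size u)%N.
  apply: H => // i /mapP [m _ ->]; rewrite mem_iota add0n; by case: (proj2_sig (Hidx m)).
by move=> H'; have := leq_trans H' Hs; rewrite ltnn.
Qed.

Lemma measure_min X (c : X -> nat) (Y : X -> Prop) :
  (exists y, Y y) -> exists y, Y y /\ forall y', Y y' -> ~ (c y' < c y)%N.
Proof.
move=> [y0 Hy0]; apply: NNPP => Hno.
have H : forall n y, Y y -> (n <= c y)%N.
  elim=> [//|n IH] y Hy.
  have [y' [Hy' Hlt]] : exists y', Y y' /\ (c y' < c y)%N.
    apply: NNPP => H; apply: Hno; exists y; split=> // y' Hy' Hl; apply: H; by exists y'.
  exact: leq_ltn_trans (IH _ Hy') Hlt.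
by have := H (c y0).+1 _ Hy0; rewrite ltnn.
Qed.

Lemma top_lemma T (U : T -> Prop) (R : T -> T -> Prop) :
  (forall x y z, U x -> U y -> U z -> R x y -> R y z -> R x z) ->
  (forall x y, U x -> U y -> x = y \/ R x y \/ R y x) ->
  forall L : list T, (exists x, List.In x L /\ U x) ->
  exists al, List.In al L /\ U al /\ forall x, List.In x L -> U x -> x = al \/ R x al.
Proof.
move=> Htr Htot; elim=> [[x [[] _]]|y L IH] Hex.
case: (classic (exists x, List.In x L /\ U x)) => [H|H].
  case: (IH H) => al [Hal [Ual Hmax]].
  case: (classic (U y)) => Uy.
    case: (Htot y al Uy Ual) => [E|[Ryal|Raly]].
    - exists al; split; [by right|split=> // x [<-|Hx] Ux]; [by left|exact: Hmax].
    - exists al; split; [by right|split=> // x [<-|Hx] Ux]; [by right|exact: Hmax].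
    - exists y; split; [by left|split=> // x [<-|Hx] Ux]; first by left.
      right; case: (Hmax x Hx Ux) => [->//|Rxal]; exact: Htr Rxal Raly.
  exists al; split; [by right|split=> // x [<-|Hx] Ux]; [by []|exact: Hmax].
case: Hex => x [[<-|Hx] Ux]; last by exfalso; apply: H; exists x.
exists y; split; [by left|split=> // x' [<-|Hx'] Ux']; first by left.
by exfalso; apply: H; exists x'.
Qed.

Lemma max_list X (P : X -> Prop) (r : X -> X -> Prop) :
  (forall x, P x -> ~ r x x) ->
  (forall x y z, P x -> P y -> P z -> r x y -> r y z -> r x z) ->
  forall L, (exists x, List.In x L /\ P x) ->
  exists x, List.In x L /\ P x /\ forall y, List.In y L -> P y -> ~ r x y.
Proof.
move=> Hirr Htr; elim=> [[x [[] _]]|y L IH] Hex.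
case: (classic (exists x, List.In x L /\ P x)) => [H|H].
  case: (IH H) => m [Hm [Pm Hmax]].
  case: (classic (P y /\ r m y)) => [[Py Rmy]|Hn].
    exists y; split; [by left|split=> // z [<-|Hz] Pz Ryz]; first exact: Hirr Ryz.
    exact: Hmax Hz Pz (Htr _ _ _ Pm Py Pz Rmy Ryz).
  exists m; split; [by right|split=> // z [<-|Hz] Pz]; last exact: Hmax.
  by move=> R; apply: Hn.
case: Hex => x [[<-|Hx] Px]; last by exfalso; apply: H; exists x.
exists y; split; [by left|split=> // z [<-|Hz] Pz]; first exact: Hirr.
by exfalso; apply: H; exists z.
Qed.

Lemma sig_val_inj T (P : T -> Prop) (x y : {t : T | P t}) : proj1_sig x = proj1_sig y -> x = y.
Proof.
case: x => x px; case: y => y py /= E; subst y.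
by rewrite (proof_irrelevance _ px py).
Qed.

Lemma finlist T (U : T -> Prop) (f : T -> nat) :
  (forall x y, U x -> U y -> f x = f y -> x = y) ->
  forall C, exists L, forall w, U w -> (f w < C)%N -> List.In w L.
Proof.
move=> finj; elim=> [|C [L HL]]; first by exists nil.
case: (classic (exists w, U w /\ f w = C)) => [[w0 [Uw0 Hw0]]|Hno].
  exists (w0 :: L) => w Uw; rewrite ltnS leq_eqVlt => /orP [/eqP E|Hlt].
    by left; apply: finj => //; rewrite E.
  by right; exact: HL.
exists L => w Uw; rewrite ltnS leq_eqVlt => /orP [/eqP E|Hlt]; last exact: HL.
by exfalso; apply: Hno; exists w.
Qed.

Section Comb.
Variables (k : nat) (S : Type) (Lam : wseq k S -> Prop).

Definition Wset (U : (nat -> S) -> Prop) (u : seq (nat -> S)) (eta : wseq k S) : Prop :=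
  Lam eta /\ (forall l, U (eta l) \/ List.In (eta l) u) /\
  (forall y, List.In y u -> exists l, eta l = y).

Definition GoodP (U : (nat -> S) -> Prop) (u : seq (nat -> S))
   (lt : wseq k S -> wseq k S -> Prop) : Prop :=
  (forall x, Wset U u x -> ~ lt x x) /\
  (forall x y z, Wset U u x -> Wset U u y -> Wset U u z -> lt x y -> lt y z -> lt x z) /\
  (forall Y : wseq k S -> Prop, (forall y, Y y -> Wset U u y) -> (exists y, Y y) ->
      exists y, Y y /\ forall y', Y y' -> ~ lt y' y) /\
  (forall eta, Wset U u eta -> exists m : 'I_k.+1,
      (forall y, List.In y u -> exists l, l != m /\ eta l = y) /\
      exists N, forall n, (N <= n)%N -> forall nu, Wset U u nu ->
        restr nu m n = restr eta m n -> nu = eta \/ lt eta nu).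

Definition Good U u : Prop := exists lt, GoodP U u lt.

Lemma comb_base U u : (size u <= k)%N -> card_le_aleph 0 U -> Good U u.
Proof.
move=> Hs [f finj].
pose cd x := if pb (U x) then (f x).+1 else 0%N.
pose c (eta : wseq k S) := (\max_(l < k.+1) cd (eta l))%N.
exists (fun x y => (c x < c y)%N); split; first by move=> x _; rewrite ltnn.
split; first by move=> x y z _ _ _; exact: ltn_trans.
split; first by move=> Y _ HY; apply: measure_min.
move=> eta [Leta [Hco Hcov]].
case: (pigeon (eta := eta) Hs Hcov) => m Hm; exists m; split=> //.
case: (finlist finj (c eta)) => Lc HLc.
case: (sep_lemma (Lc ++ u) (eta m)) => N HN; exists N => n Hn nu [Lnu [Hnuco _]] E.
case: (classic (c eta < c nu)%N) => Hlt; [by right|left].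
case: (restr_inj E) => _ [_ [Hoff Hseq]].
apply: wseq_ext Hoff _; apply: (HN n Hn) => //; apply: List.in_or_app.
case: (Hnuco m) => [Um|]; [left|by right].
apply: HLc => //.
have H1 : (cd (nu m) <= c nu)%N by exact: (@leq_bigmax _ (fun l => cd (nu l)) m).
rewrite /cd in H1; case: pbP H1 => // _ H1.
move/negP: Hlt; rewrite -leqNgt => Hle; exact: leq_trans H1 Hle.
Qed.


Lemma In_coords (eta : wseq k S) x :
  List.In x (List.map eta (enum 'I_k.+1)) <-> exists l, eta l = x.
Proof.
rewrite List.in_map_iff; split=> [[l [E _]]|[l E]]; first by exists l.
by exists l; split=> //; apply/In_mem; rewrite mem_enum.
Qed.

Lemma comb_step n :
  (forall U u, (size u + n <= k)%N -> (forall y, List.In y u -> ~ U y) ->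
     card_le_aleph n U -> Good U u) ->
  forall U u, (size u + n.+1 <= k)%N -> (forall y, List.In y u -> ~ U y) ->
     card_le_aleph n.+1 U -> Good U u.
Proof.
move=> IH U u Hs Hdisj [R [[Rirr [Rtr [Rtot Rmin]]] Hseg]].
pose hasU (eta : wseq k S) := exists l, U (eta l).
pose topP (eta : wseq k S) al := U al /\ (exists l, eta l = al) /\
   forall l, U (eta l) -> eta l = al \/ R (eta l) al.
have topE : forall eta, exists al, hasU eta -> topP eta al.
  move=> eta; case: (classic (hasU eta)) => [[l0 Ul0]|Hn]; last by exists (eta ord0).
  have := @top_lemma _ U R Rtr Rtot (List.map eta (enum 'I_k.+1)).
  case.
    by exists (eta l0); split=> //; apply/In_coords; exists l0.
  move=> al [/In_coords Hal [Ual Hmax]]; exists al => _; split=> //; split=> // l Ul.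
  by apply: Hmax => //; apply/In_coords; exists l.
pose top eta := proj1_sig (constructive_indefinite_description _ (topE eta)).
have topS : forall eta, hasU eta -> topP eta (top eta).
  by move=> eta; exact: (proj2_sig (constructive_indefinite_description _ (topE eta))).
pose Ua al := fun y => U y /\ R y al.
pose ua al := u ++ [:: al].
have Gd : forall al, exists lt, U al -> GoodP (Ua al) (ua al) lt.
  move=> al; case: (classic (U al)) => Ual; last by exists (fun _ _ => False).
  have : Good (Ua al) (ua al).
    apply: IH; first by rewrite size_cat /= addn1 addSn -addnS.
      move=> y Hy; case: (List.in_app_or _ _ _ Hy) => [/Hdisj Hy' [Uy _]|[<-|[]] [_ Ry]] //.
      exact: Rirr Ry.
    exact: Hseg.
  by case=> lt Hlt; exists lt.
pose la al := proj1_sig (constructive_indefinite_description _ (Gd al)).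
have laS : forall al, U al -> GoodP (Ua al) (ua al) (la al).
  by move=> al; exact: (proj2_sig (constructive_indefinite_description _ (Gd al))).
have Wtop : forall eta, Wset U u eta -> hasU eta -> Wset (Ua (top eta)) (ua (top eta)) eta.
  move=> eta [Leta [Hco Hcov]] hU; case: (topS _ hU) => Ut [[l0 El0] Hmax].
  split=> //; split.
    move=> l; case: (Hco l) => [Ul|Hl]; last by right; apply: List.in_or_app; left.
    case: (Hmax l Ul) => [->|Rl]; first by right; apply: List.in_or_app; right; left.
    by left.
  move=> y Hy; case: (List.in_app_or _ _ _ Hy) => [/Hcov //|[<-|[]]]; by exists l0.
have hasU_top : forall eta, hasU eta -> U (top eta) by move=> eta /topS [].
exists (fun x y => (~ hasU x /\ hasU y) \/
   (hasU x /\ hasU y /\ (R (top x) (top y) \/ (top x = top y /\ la (top y) x y)))).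
split.
  move=> x Wx [[H1 H2]|[hx [_ [Rx|[_ Lx]]]]] //.
    by apply: Rirr Rx; apply: hasU_top.
  case: (laS _ (hasU_top _ hx)) => Hirr _; exact: Hirr (Wtop _ Wx hx) Lx.
split.
  move=> x y z Wx Wy Wz [[nhx hy]|[hx [hy Hxy]]] [[nhy hz]|[hy' [hz Hyz]]] //.
    by left.
  right; split=> //; split=> //.
  case: Hxy => [Rxy|[Exy Lxy]]; case: Hyz => [Ryz|[Eyz Lyz]].
  - left; apply: Rtr Rxy Ryz; exact: hasU_top.
  - by left; rewrite -Eyz.
  - by left; rewrite Exy.
  - right; split; first by rewrite Exy.
    have Utz := hasU_top _ hz.
    case: (laS _ Utz) => _ [Htr _].
    apply: (Htr x y z) => //.
    + by rewrite -Eyz -Exy; apply: Wtop.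
    + by rewrite -Eyz; apply: Wtop.
    + exact: Wtop.
    + by rewrite -Eyz.
split.
  move=> Y HY Hne.
  case: (classic (exists y, Y y /\ ~ hasU y)) => [[y [Yy nhy]]|Hall].
    exists y; split=> // y' _ [[_ hy]|[_ [hy _]]]; exact: nhy.
  have hY : forall y, Y y -> hasU y.
    by move=> y Yy; apply: NNPP => nh; apply: Hall; exists y.
  case: Hne => y1 Yy1.
  case: (Rmin (fun al => exists y, Y y /\ top y = al)).
  - by move=> al [y [Yy <-]]; apply: hasU_top; apply: hY.
  - by exists (top y1), y1.
  move=> al0 [[y0 [Yy0 Ey0]] Hmin].
  have Ual0 : U al0 by rewrite -Ey0; apply: hasU_top; apply: hY.
  case: (laS _ Ual0) => _ [_ [Hwf _]].
  case: (Hwf (fun y => Y y /\ top y = al0)).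
  - by move=> y [Yy <-]; apply: Wtop; [exact: HY|exact: hY].
  - by exists y0.
  move=> z [[Yz Ez] Hz]; exists z; split=> // y' Yy' [[nh _]|[_ [_ [Ry|[Ey Ly]]]]].
  - by apply: nh; apply: hY.
  - by apply: (Hmin (top y')) => //; [exists y'|rewrite -Ez].
  - apply: (Hz y'); first by split=> //; rewrite Ey.
    by rewrite -Ez.
move=> eta Weta; case: (Weta) => Leta [Hco Hcov].
have Hsu : (size u <= k)%N by apply: leq_trans Hs; apply: leq_addr.
case: (classic (hasU eta)) => hU.
  have Ut := hasU_top _ hU.
  case: (laS _ Ut) => _ [_ [_ Hmain]].
  case: (Hmain eta (Wtop _ Weta hU)) => m [Hm [N HN]].
  exists m; split.
    by move=> y Hy; apply: Hm; apply: List.in_or_app; left.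
  exists N => n0 Hn nu Wnu E.
  case: (restr_inj E) => _ [_ [Hoff _]].
  case: (Hm (top eta)) => [|l0 [Hl0 El0]]; first by apply: List.in_or_app; right; left.
  have Enu : nu l0 = top eta by rewrite Hoff.
  have hnu : hasU nu by exists l0; rewrite Enu.
  case: (topS _ hnu) => _ [_ Hmx].
  case: (Hmx l0); first by rewrite Enu.
    move=> Et; rewrite Enu in Et.
    have W' : Wset (Ua (top eta)) (ua (top eta)) nu by rewrite Et; apply: Wtop.
    case: (HN n0 Hn nu W' E) => [->|Hl]; first by left.
    right; right; split=> //; split=> //; right; split=> //; by rewrite -Et.
  by rewrite Enu => Rt; right; right; split=> //; split=> //; left.
have Hu : forall l, List.In (eta l) u.
  by move=> l; case: (Hco l) => // Ul; exfalso; apply: hU; exists l.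
case: (pigeon (eta := eta) Hsu Hcov) => m Hm; exists m; split=> //.
case: (sep_lemma u (eta m)) => N HN; exists N => n0 Hn nu [_ [Hnuco _]] E.
case: (classic (hasU nu)) => hnu; first by right; left.
left; case: (restr_inj E) => _ [_ [Hoff Hseq]].
apply: wseq_ext Hoff _; apply: (HN n0 Hn) => //.
by case: (Hnuco m) => // Um; exfalso; apply: hnu; exists m.
Qed.

Theorem comb n U u : (size u + n <= k)%N -> (forall y, List.In y u -> ~ U y) ->
  card_le_aleph n U -> Good U u.
Proof.
elim: n U u => [|n IH] U u Hs Hd Hc.
  by apply: comb_base => //; rewrite addn0 in Hs.
exact: comb_step IH U u Hs Hd Hc.
Qed.

End Comb.

Local Open Scope ring_scope.

Section Basic.
Variables (k : nat) (S : Type).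

Lemma delta_eq (g : gen k S) : delta g g = 1.
Proof. by rewrite /delta; case: excluded_middle_informative. Qed.

Lemma delta_neq (g g' : gen k S) : g' <> g -> delta g g' = 0.
Proof. by rewrite /delta; case: excluded_middle_informative. Qed.

Lemma delta_inj (g g' : gen k S) : delta g = delta g' -> g = g'.
Proof.
move=> E; have := congr1 (fun f => f g) E; rewrite delta_eq.
case: (classic (g = g')) => // H; rewrite delta_neq //.
Qed.

Variable a : wseq k S -> nat -> int.

Lemma relv_supp (eta : wseq k S) n g : relv a eta n g <> 0 ->
  g = gy eta n.+1 \/ g = gy eta n \/ g = gz k S \/ exists m, g = gx (restr eta m n).
Proof.
move=> H; apply: NNPP => Hn; apply: H; rewrite /relv.
have h1 : delta (gy eta n.+1) g = 0 by rewrite delta_neq // => E; apply: Hn; left.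
have h2 : delta (gy eta n) g = 0 by rewrite delta_neq // => E; apply: Hn; right; left.
have h3 : delta (gz k S) g = 0 by rewrite delta_neq // => E; apply: Hn; right; right; left.
rewrite h1 h2 h3 big1; first by rewrite !mulr0 !subr0.
move=> m _; rewrite delta_neq // => E; apply: Hn; right; right; right; by exists m.
Qed.

Lemma sum_x0 (eta : wseq k S) n (g : gen k S) : (forall m, g <> gx (restr eta m n)) ->
  \sum_(m < k.+1) delta (gx (restr eta m n)) g = 0.
Proof. by move=> H; rewrite big1 // => m _; rewrite delta_neq. Qed.

Lemma relv_y1 (eta : wseq k S) n : relv a eta n (gy eta n.+1) = (n`!)%:Z.
Proof.
rewrite /relv delta_eq !delta_neq ?sum_x0 ?mulr1 ?mulr0 ?subr0 //.
by case=> /eqP; rewrite eq_sym ltn_eqF.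
Qed.

Lemma relv_y0 (eta : wseq k S) n : relv a eta n (gy eta n) = -1.
Proof.
rewrite /relv delta_eq !delta_neq ?sum_x0 ?mulr1 ?mulr0 ?subr0 ?sub0r //.
by case=> /eqP; rewrite ltn_eqF.
Qed.

Lemma relv_x (eta : wseq k S) n m : relv a eta n (gx (restr eta m n)) = -1.
Proof.
rewrite /relv !delta_neq ?mulr0 ?subr0 ?sub0r //.
rewrite (bigD1 m) //= delta_eq big1 ?addr0 // => m' Hm'.
rewrite delta_neq // => -[E]; have := restr_self E; move/eqP: Hm'; by move=> H /esym.
Qed.

End Basic.

Section Alg.
Variables (k : nat) (S : Type) (Lam : wseq k S -> Prop) (a : wseq k S -> nat -> int).
Variables (U : (nat -> S) -> Prop) (u : seq (nat -> S)).
Hypothesis Hdisj : forall y, List.In y u -> ~ U y.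
Variable lt : wseq k S -> wseq k S -> Prop.
Hypothesis Hgood : GoodP Lam U u lt.

Local Notation W := (Wset Lam U u).

Lemma mN_ex (eta : wseq k S) : exists p : 'I_k.+1 * nat, W eta ->
   (forall y, List.In y u -> exists l, l != p.1 /\ eta l = y) /\
   (forall n, (p.2 <= n)%N -> forall nu, W nu ->
        restr nu p.1 n = restr eta p.1 n -> nu = eta \/ lt eta nu).
Proof.
case: (classic (W eta)) => We; last by exists (ord0, 0%N).
case: Hgood => _ [_ [_ H]]; case: (H eta We) => m [Hm [N HN]].
by exists (m, N).
Qed.

Definition mN eta := proj1_sig (constructive_indefinite_description _ (mN_ex eta)).
Definition mm eta := (mN eta).1.
Definition NN eta := (mN eta).2.

Lemma mm_cov eta : W eta -> forall y, List.In y u -> exists l, l != mm eta /\ eta l = y.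
Proof. by move=> We; case: (proj2_sig (constructive_indefinite_description _ (mN_ex eta)) We). Qed.

Lemma NN_sep eta : W eta -> forall n, (NN eta <= n)%N -> forall nu, W nu ->
   restr nu (mm eta) n = restr eta (mm eta) n -> nu = eta \/ lt eta nu.
Proof. by move=> We; case: (proj2_sig (constructive_indefinite_description _ (mN_ex eta)) We). Qed.

Definition genU (P : (nat -> S) -> Prop) (g : gen k S) : Prop :=
  g = gz k S \/ (exists eta n, Lam eta /\ (forall l, P (eta l)) /\ g = gy eta n) \/
  (exists eta m n, Lam eta /\ (forall l, P (eta l)) /\ g = gx (restr eta m n)).

Lemma gensU_iff P v : gensU Lam P v <-> exists g, v = delta g /\ genU P g.
Proof.
split.
  case=> [->|[[eta [n [L [H ->]]]]|[eta [m [n [L [H ->]]]]]]]; eexists; split; try reflexivity.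
  - by left.
  - by right; left; exists eta, n.
  - by right; right; exists eta, m, n.
case=> g [-> [->|[[eta [n [L [H ->]]]]|[eta [m [n [L [H ->]]]]]]]].
- by left.
- by right; left; exists eta, n.
- by right; right; exists eta, m, n.
Qed.

Definition isA g := exists e, List.In e u /\ genU (fun nu => U nu \/ (List.In nu u /\ nu <> e)) g.
Definition isT g := genU (fun nu => U nu \/ List.In nu u) g.
Definition cg eta n := if (n < NN eta)%N then gy eta n else gx (restr eta (mm eta) n).
Definition chosen g := exists eta n, W eta /\ g = cg eta n.
Definition basis g := isT g /\ ~ isA g /\ ~ chosen g.
Definition outy (g : gen k S) := exists (nu : wseq k S) n, g = gy nu n /\ ~ (forall l, U (nu l) \/ List.In (nu l) u).

Lemma gensUu_iff v : gensUu Lam U u v <-> exists g, v = delta g /\ isA g.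
Proof.
split.
  case=> e [He /gensU_iff [g [-> Hg]]]; exists g; split=> //; by exists e.
case=> g [-> [e [He Hg]]]; exists e; split=> //; apply/gensU_iff; by exists g.
Qed.

Lemma W_y_notA eta n : W eta -> ~ isA (gy eta n).
Proof.
move=> [_ [_ Hcov]] [e [He [//|[[nu [n' [_ [Hnu [E _]]]]]|[nu [m [n' [_ [_ //]]]]]]]]].
subst nu; case: (Hcov e He) => l El.
case: (Hnu l) => [|[_ //]]; rewrite El; exact: Hdisj.
Qed.

Lemma x_notA eta n : W eta -> ~ isA (gx (restr eta (mm eta) n)).
Proof.
move=> We [e [He [//|[[nu [n' [_ [_ //]]]]|[nu [m [n' [_ [Hnu [E]]]]]]]]]].
case: (restr_inj E) => Em [_ [Hoff _]]; subst m.
case: (mm_cov We He) => l [Hl El].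
have Enl : nu l = e by rewrite -Hoff.
case: (Hnu l); rewrite Enl; [exact: Hdisj|by case].
Qed.

Lemma cg_notA eta n : W eta -> ~ isA (cg eta n).
Proof. rewrite /cg; case: ifP => _; [exact: W_y_notA|exact: x_notA]. Qed.

Lemma isT_z : isT (gz k S).
Proof. by left. Qed.
Lemma W_isT_y eta n : W eta -> isT (gy eta n).
Proof. by case=> L [H _]; right; left; exists eta, n. Qed.
Lemma W_isT_x eta m n : W eta -> isT (gx (restr eta m n)).
Proof. by case=> L [H _]; right; right; exists eta, m, n. Qed.

Lemma Arelv nu n e g : Lam nu -> List.In e u ->
  (forall l, U (nu l) \/ (List.In (nu l) u /\ nu l <> e)) -> relv a nu n g <> 0 -> isA g.
Proof.
move=> L He H /relv_supp [->|[->|[->|[m ->]]]]; exists e; split=> //.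
- by right; left; exists nu, n.+1.
- by right; left; exists nu, n.
- by left.
- by right; right; exists nu, m, n.
Qed.

Definition ordP (p q : wseq k S * nat) : Prop :=
  lt p.1 q.1 \/ (p.1 = q.1 /\ (q.2 < p.2)%N /\ (p.2 < NN p.1)%N).

Lemma cg_in_relv eta mu n n' : W eta -> W mu -> relv a mu n' (cg eta n) <> 0 ->
  (mu = eta /\ n' = n) \/ ordP (eta, n) (mu, n').
Proof.
move=> We Wmu; rewrite /cg; case: ifP => Hn.
  move/relv_supp => [[E1 E2]|[[E1 E2]|[//|[m //]]]]; subst mu.
    subst n; right; right; split=> //.
  by left.
move/relv_supp => [//|[//|[//|[m [E]]]]].
case: (restr_inj E) => Em [En _]; subst m n'.
have Hge : (NN eta <= n)%N by rewrite leqNgt Hn.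
case: (NN_sep We Hge Wmu (esym E)) => [->|Hl]; [by left|by right; left].
Qed.

Lemma relv_cg eta n : relv a eta n (cg eta n) = -1.
Proof. by rewrite /cg; case: ifP => _; [exact: relv_y0|exact: relv_x]. Qed.


Definition H2 := Gsub Lam a (gensUu Lam U u).
Definition Ity := {g : gen k S | basis g}.
Definition bas (i : Ity) : vect k S := delta (proj1_sig i).
Definition Rep (v : vect k S) := exists l : seq (int * Ity),
  H2 (fun g => v g - \sum_(p <- l) p.1 * bas p.2 g).

Lemma Rep_H2 v : H2 v -> Rep v.
Proof.
move=> H; exists [::]; apply: span_eq H => g; by rewrite big_nil subr0.
Qed.

Lemma Rep_ext v w : (forall g, v g = w g) -> Rep v -> Rep w.
Proof. by move=> E; have -> : v = w by apply: functional_extensionality. Qed.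

Lemma Rep_add v w : Rep v -> Rep w -> Rep (fun g => v g + w g).
Proof.
move=> [l1 H1] [l2 H2']; exists (l1 ++ l2).
apply: span_eq (spanD H1 H2') => g; by rewrite big_cat /= opprD addrACA.
Qed.

Lemma Rep_scale c v : Rep v -> Rep (fun g => c * v g).
Proof.
move=> [l H]; exists [seq (c * p.1, p.2) | p <- l].
apply: span_eq (spanZ c H) => g; rewrite big_map mulrBr mulr_sumr; congr (_ - _).
by apply: eq_bigr => p _; rewrite mulrA.
Qed.

Lemma Rep_opp v : Rep v -> Rep (fun g => - v g).
Proof. move/(Rep_scale (-1)); apply: Rep_ext => g; by rewrite mulN1r. Qed.

Lemma Rep_sub v w : Rep v -> Rep w -> Rep (fun g => v g - w g).
Proof. by move=> Hv /Rep_opp Hw; apply: Rep_add. Qed.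

Lemma Rep_zero : Rep (fun _ => 0).
Proof. apply: Rep_H2; exact: span0. Qed.

Lemma Rep_sum (X : Type) (s : seq X) (F : X -> vect k S) :
  (forall x, List.In x s -> Rep (F x)) -> Rep (fun g => \sum_(x <- s) F x g).
Proof.
elim: s => [|x s IH] H.
  by apply: Rep_ext Rep_zero => g; rewrite big_nil.
apply: Rep_ext (Rep_add (H x (or_introl erefl)) (IH (fun y Hy => H y (or_intror Hy)))).
by move=> g; rewrite big_cons.
Qed.

Lemma Rep_sum_ord (P : pred 'I_k.+1) (F : 'I_k.+1 -> vect k S) :
  (forall i, P i -> Rep (F i)) -> Rep (fun g => \sum_(i < k.+1 | P i) F i g).
Proof.
move=> H; apply: (Rep_ext (v := fun g => \sum_(i <- index_enum 'I_k.+1) (fun i g => if P i then F i g else 0) i g)).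
  by move=> g; rewrite [in RHS]big_mkcond.
apply: Rep_sum => i _; case: (boolP (P i)) => Pi.
  exact: Rep_ext (H i Pi).
exact: Rep_zero.
Qed.

Lemma Rep_basis g : basis g -> Rep (delta g).
Proof.
move=> Hb; exists [:: (1, exist _ g Hb)]; apply: span_eq (span0 _) => g'.
by rewrite big_cons big_nil addr0 mul1r /bas /= subrr.
Qed.

Lemma Rep_A g : isA g -> Rep (delta g).
Proof.
move=> HA; apply: Rep_H2; apply: span_gen; left; apply/gensUu_iff; by exists g.
Qed.

Lemma Rep_relv eta n : Lam eta -> Rep (relv a eta n).
Proof. move=> L; apply: Rep_H2; apply: span_gen; right; by exists eta, n. Qed.

Lemma Rep_T g : isT g -> (chosen g -> Rep (delta g)) -> Rep (delta g).
Proof.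
move=> HT Hc; case: (classic (isA g)) => HA; first exact: Rep_A.
case: (classic (chosen g)) => Hch; first exact: Hc.
exact: Rep_basis.
Qed.

Lemma cg_y_inv mu n eta n' : cg mu n = gy eta n' -> mu = eta /\ n = n' /\ (n < NN mu)%N.
Proof. rewrite /cg; case: ifP => // Hn [-> ->]; by subst. Qed.

Lemma y_not_chosen eta n : (NN eta <= n)%N -> ~ chosen (gy eta n).
Proof.
move=> Hn [mu [n' [_ E]]]; case: (cg_y_inv (esym E)) => E1 [E2 H]; subst.
by rewrite ltnNge Hn in H.
Qed.

Lemma z_not_chosen : ~ chosen (gz k S).
Proof. by move=> [mu [n' [_]]]; rewrite /cg; case: ifP. Qed.

Lemma x_owner eta m n mu n' : W eta -> W mu -> gx (restr eta m n) = cg mu n' ->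
  mm mu = m /\ n' = n /\ (NN mu <= n)%N /\ (eta = mu \/ lt mu eta).
Proof.
move=> We Wmu; rewrite /cg; case: ifP => // Hn [E].
case: (restr_inj E) => Em [En _]; subst m n'.
have Hge : (NN mu <= n)%N by rewrite leqNgt Hn.
split=> //; split=> //; split=> //; exact: (NN_sep Wmu Hge We E).
Qed.

Lemma relv_expand_y eta n g : delta (gy eta n) g =
  (n`!)%:Z * delta (gy eta n.+1) g - a eta n * delta (gz k S) g
  - \sum_(m < k.+1) delta (gx (restr eta m n)) g - relv a eta n g.
Proof. rewrite /relv; ring. Qed.

Lemma relv_expand_x eta n m0 g : delta (gx (restr eta m0 n)) g =
  (n`!)%:Z * delta (gy eta n.+1) g - delta (gy eta n) g - a eta n * delta (gz k S) g
  - \sum_(m < k.+1 | m != m0) delta (gx (restr eta m n)) g - relv a eta n g.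
Proof.
have E : \sum_(m < k.+1) delta (gx (restr eta m n)) g = delta (gx (restr eta m0 n)) g +
   \sum_(m < k.+1 | m != m0) delta (gx (restr eta m n)) g by rewrite (bigD1 m0).
rewrite /relv E; ring.
Qed.


Lemma Rep_chosen : forall eta, W eta -> forall n, Rep (delta (cg eta n)).
Proof.
apply: NNPP => Hno.
case: (Hgood) => _ [_ [Hwf _]].
case: (Hwf (fun eta => W eta /\ exists n, ~ Rep (delta (cg eta n)))).
- by move=> y [].
- apply: NNPP => H; apply: Hno => eta We n; apply: NNPP => Hr; apply: H.
  by exists eta; split=> //; exists n.
move=> eta [[We [n0 Hn0]] Hmin]; apply: Hn0.
have IH : forall mu, W mu -> lt mu eta -> forall n, Rep (delta (cg mu n)).
  move=> mu Wmu Hl n; apply: NNPP => H; apply: (Hmin mu) => //; split=> //; by exists n.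
have Hx : forall m n, ~ (m = mm eta /\ (NN eta <= n)%N) -> Rep (delta (gx (restr eta m n))).
  move=> m n Hmn; apply: Rep_T; first exact: W_isT_x.
  move=> [mu [n' [Wmu E]]]; case: (x_owner We Wmu E) => Em [En [Hle [Eq|Hl]]].
    by exfalso; apply: Hmn; subst; split.
  by rewrite E; apply: IH.
have Hyb : forall n, (NN eta <= n)%N -> Rep (delta (gy eta n)).
  move=> n Hn; apply: Rep_basis; split; first exact: W_isT_y.
  split; [exact: W_y_notA|exact: y_not_chosen].
have Hz : Rep (delta (gz k S)).
  by apply: Rep_T; [exact: isT_z|move/z_not_chosen].
have Hyc : forall d n, NN eta = (n + d)%N -> Rep (delta (gy eta n)).
  elim=> [|d IHd] n E; first by apply: Hyb; rewrite E addn0.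
  have Hlt : (n < NN eta)%N by rewrite E addnS ltnS leq_addr.
  apply: (Rep_ext (v := fun g => (n`!)%:Z * delta (gy eta n.+1) g - a eta n * delta (gz k S) g
     - \sum_(m < k.+1) delta (gx (restr eta m n)) g - relv a eta n g)).
    by move=> g; rewrite [in RHS]relv_expand_y.
  apply: Rep_sub; last by apply: Rep_relv; case: We.
  apply: Rep_sub; last first.
    apply: Rep_sum_ord => m _; apply: Hx => -[_ Hle].
    by rewrite leqNgt Hlt in Hle.
  apply: Rep_sub; last exact: Rep_scale.
  apply: Rep_scale; apply: IHd; by rewrite E addSnnS.
rewrite /cg; case: ifP => Hn.
  apply: (Hyc (NN eta - n0)%N); by rewrite subnKC // ltnW.
have Hge : (NN eta <= n0)%N by rewrite leqNgt Hn.
apply: (Rep_ext (v := fun g => (n0`!)%:Z * delta (gy eta n0.+1) g - delta (gy eta n0) g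
   - a eta n0 * delta (gz k S) g
   - \sum_(m < k.+1 | m != mm eta) delta (gx (restr eta m n0)) g - relv a eta n0 g)).
  by move=> g; rewrite [in RHS](relv_expand_x _ _ (mm eta)).
apply: Rep_sub; last by apply: Rep_relv; case: We.
apply: Rep_sub; last first.
  by apply: Rep_sum_ord => m Hm; apply: Hx => -[Em _]; rewrite Em eqxx in Hm.
apply: Rep_sub; last exact: Rep_scale.
apply: Rep_sub; last exact: Hyb.
apply: Rep_scale; apply: Hyb; exact: leqW.
Qed.

Lemma spanning v : Gsub Lam a (gensU Lam (fun nu => U nu \/ List.In nu u)) v -> Rep v.
Proof.
move=> [L [HL ->]]; apply: Rep_sum => q Hq; apply: Rep_scale.
case: (HL q Hq) => [/gensU_iff [g [-> Hg]]|[eta [n [Leta ->]]]]; last exact: Rep_relv.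
apply: Rep_T => // -[mu [n [Wmu ->]]]; exact: Rep_chosen.
Qed.


Lemma big1_In (X : Type) (L : seq X) (P : pred X) (F : X -> int) :
  (forall x, List.In x L -> P x -> F x = 0) -> \sum_(x <- L | P x) F x = 0.
Proof.
elim: L => [|x L IH] H; first by rewrite big_nil.
rewrite big_cons IH; last by move=> y Hy; apply: H; right.
case: ifP => // Px; rewrite H ?add0r //; by left.
Qed.

Lemma count_In (X : Type) (L : seq X) (P : pred X) x : List.In x L -> P x -> (0 < count P L)%N.
Proof.
elim: L => [//|y L IH] /= [->|Hx] Px; first by rewrite Px.
by rewrite addnC ltn_addr // IH.
Qed.

Lemma npbP (P : Prop) : ~~ pb P -> ~ P.
Proof. by move=> /negP H HP; apply: H; apply/pbP. Qed.

Inductive item := IA of gen k S | IR of wseq k S & nat.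

Definition ivec (it : item) : vect k S :=
  match it with IA g => delta g | IR eta n => relv a eta n end.
Definition valid (it : item) : Prop :=
  match it with IA g => isA g | IR eta n => Lam eta end.
Definition SL (L : seq (int * item)) (g : gen k S) := \sum_(q <- L) q.1 * ivec q.2 g.

Lemma H2_items v : H2 v -> exists L, (forall q, List.In q L -> valid q.2) /\ forall g, v g = SL L g.
Proof.
move=> [L0 [HL0 ->]]; elim: L0 HL0 => [|q L0 IH] HL.
  by exists [::]; split=> // g; rewrite /SL !big_nil.
case: IH => [p Hp|L [HLv HLe]]; first by apply: HL; right.
case: (HL q (or_introl erefl)) => [/gensUu_iff [g [Eq Hg]]|[eta [n [Leta Eq]]]].
  exists ((q.1, IA g) :: L); split; first by move=> p [<-|/HLv].
  move=> g' /=; rewrite big_cons /SL big_cons /=; have := HLe g'; rewrite /SL /= => ->; by rewrite Eq.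
exists ((q.1, IR eta n) :: L); split; first by move=> p [<-|/HLv].
move=> g' /=; rewrite big_cons /SL big_cons /=; have := HLe g'; rewrite /SL /= => ->; by rewrite Eq.
Qed.

Lemma SL_remove (L : seq (int * item)) (it0 : item) g :
  SL L g = SL [seq q <- L | ~~ pb (q.2 = it0)] g +
           (\sum_(q <- L | pb (q.2 = it0)) q.1) * ivec it0 g.
Proof.
rewrite /SL (bigID (fun q => pb (q.2 = it0))) /= addrC big_filter; congr (_ + _).
rewrite mulr_suml; apply: eq_bigr => q /pbP ->; done.
Qed.

Lemma size_remove (L : seq (int * item)) (it0 : item) (q0 : int * item) : List.In q0 L -> q0.2 = it0 ->
  (size [seq q <- L | ~~ pb (q.2 = it0)] < size L)%N.
Proof.
move=> Hin E; rewrite size_filter.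
have := count_predC (fun q => pb (q.2 = it0)) L.
have Hpos : (0 < count (fun q => pb (q.2 = it0)) L)%N.
  by apply: (count_In Hin); apply/pbP.
move=> <-; rewrite -[X in (X < _)%N]add0n ltn_add2r; exact: Hpos.
Qed.

Definition outside (eta : wseq k S) := ~ (forall l, U (eta l) \/ List.In (eta l) u).

Lemma isA_y_inside eta n : isA (gy eta n) -> forall l, U (eta l) \/ List.In (eta l) u.
Proof.
move=> [e [He [//|[[nu [n' [_ [Hnu [E _]]]]]|[nu [m [n' [_ [_ //]]]]]]]]].
subst nu => l; case: (Hnu l) => [?|[? _]]; by [left|right].
Qed.

Lemma indep_core : forall N L, (size L <= N)%N -> (forall q, List.In q L -> valid q.2) ->
  (forall g, chosen g \/ outy g -> SL L g = 0) -> forall g, ~ isA g -> SL L g = 0.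
Proof.
elim=> [|N IHN] L HsL Hv Hh.
  by case: L HsL Hv Hh => // _ _ _ g _; rewrite /SL big_nil.
have Hrem : forall it0 q0, List.In q0 L -> q0.2 = it0 ->
   (\sum_(q <- L | pb (q.2 = it0)) q.1) = 0 -> forall g, ~ isA g -> SL L g = 0.
  move=> it0 q0 Hq0 E0 D0 g HgA.
  have Eq : forall g, SL L g = SL [seq q <- L | ~~ pb (q.2 = it0)] g.
    by move=> g'; rewrite (SL_remove L it0) D0 mul0r addr0.
  rewrite Eq; apply: IHN => //.
  - by rewrite -ltnS; apply: leq_trans (size_remove Hq0 E0) HsL.
  - by move=> q /List.filter_In [Hq _]; apply: Hv.
  - by move=> g' Hg'; rewrite -Eq; apply: Hh.
case: (classic (exists q, List.In q L /\ exists eta n, q.2 = IR eta n /\ outside eta)) => [Hout|Hnout].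
  case: (max_list (P := fun q => exists eta n, q.2 = IR eta n /\ outside eta)
     (r := fun q q' => exists eta n n', q.2 = IR eta n /\ q'.2 = IR eta n' /\ (n < n')%N) _ _ Hout).
  - by move=> x _ [eta [n [n' [-> [[E] H]]]]]; subst n'; rewrite ltnn in H.
  - move=> x y z _ _ _ [e1 [n1 [n2 [E1 [E2 H12]]]]] [e2 [n3 [n4 [E3 [E4 H34]]]]].
    rewrite E2 in E3; case: E3 => ? ?; subst e2 n3.
    exists e1, n1, n4; split=> //; split=> //; exact: ltn_trans H12 H34.
  move=> qs [Hqs [[eta [n [Eqs Hout']]] Hmax]].
  apply: (Hrem (IR eta n) qs) => //.
  have Hy : SL L (gy eta n.+1) = (\sum_(q <- L | pb (q.2 = IR eta n)) q.1) * (n`!)%:Z.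
    rewrite (SL_remove L (IR eta n)) /= relv_y1; rewrite /SL big_filter big1_In ?add0r //.
    move=> q Hq /npbP Hne.
    move: (Hv q Hq); case E: q.2 => [g|mu n'] Hval /=.
      rewrite delta_neq ?mulr0 // => Eg; subst g.
      by apply: Hout'; apply: isA_y_inside Hval.
    case: (classic (relv a mu n' (gy eta n.+1) = 0)) => [->|Hnz]; first by rewrite mulr0.
    case: (relv_supp Hnz) => [[E1 E2]|[[E1 E2]|[//|[m //]]]]; subst mu.
      by exfalso; apply: Hne; rewrite E; congr IR.
    exfalso; apply: (Hmax q Hq); first by exists eta, n'; split.
    by exists eta, n, n'; split=> //; split=> //; rewrite -E2.
  have : SL L (gy eta n.+1) = 0 by apply: Hh; right; exists eta, n.+1.
  rewrite Hy => /eqP; rewrite mulf_eq0 => /orP [/eqP //|].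
  move/eqP => -[] H; have := fact_gt0 n; by rewrite H.
case: (classic (exists q, List.In q L /\ exists eta n, q.2 = IR eta n /\ W eta)) => [HW|HnW].
  case: Hgood => Hirr [Htr _].
  case: (max_list (P := fun q => exists eta n, q.2 = IR eta n /\ W eta)
     (r := fun q q' => exists eta n mu n', q.2 = IR eta n /\ q'.2 = IR mu n' /\ ordP (eta, n) (mu, n')) _ _ HW).
  - move=> x [eta0 [n0 [E0 W0]]] [eta [n [mu [n' [E1 [E2 H]]]]]].
    rewrite E1 in E2 E0; case: E2 => ? ?; case: E0 => ? ?; subst.
    case: H => [/Hirr|[_ [H _]]] //; by rewrite /= ltnn in H.
  - move=> x y z [e0 [n0 [Ex Wx]]] [e1 [n1 [Ey Wy]]] [e2 [n2 [Ez Wz]]]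
      [ea [na [mb [nb [E1 [E2 H12]]]]]] [ec [nc [md [nd [E3 [E4 H34]]]]]].
    rewrite Ex in E1; case: E1 => ? ?; subst ea na.
    rewrite Ey in E2 E3; case: E2 => ? ?; case: E3 => ? ?; subst mb nb ec nc.
    rewrite Ez in E4; case: E4 => ? ?; subst md nd.
    exists e0, n0, e2, n2; split=> //; split=> //.
    case: H12 => [H12|[/= E12 [H12 H12']]]; case: H34 => [H34|[/= E34 [H34 H34']]].
    + by left; apply: Htr H12 H34.
    + by left; rewrite -E34.
    + by left; rewrite E12.
    + right; rewrite /= E12 E34; split=> //; split; first exact: ltn_trans H34 H12.
      by rewrite -E34 -E12.
  move=> qs [Hqs [[eta [n [Eqs Weta]]] Hmax]].
  apply: (Hrem (IR eta n) qs) => //.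
  have Hc : SL L (cg eta n) = (\sum_(q <- L | pb (q.2 = IR eta n)) q.1) * (-1).
    rewrite (SL_remove L (IR eta n)) /= relv_cg; rewrite /SL big_filter big1_In ?add0r //.
    move=> q Hq /npbP Hne.
    move: (Hv q Hq); case E: q.2 => [g|mu n'] Hval /=.
      rewrite delta_neq ?mulr0 // => Eg; subst g.
      exact: (cg_notA Weta Hval).
    case: (classic (relv a mu n' (cg eta n) = 0)) => [->|Hnz]; first by rewrite mulr0.
    exfalso.
    have Hin : forall l, U (mu l) \/ List.In (mu l) u.
      apply: NNPP => Ho; apply: Hnout; exists q; split=> //; exists mu, n'; by split.
    case: (classic (forall y, List.In y u -> exists l, mu l = y)) => Hcov.
      have Wmu : W mu by split.
      case: (cg_in_relv Weta Wmu Hnz) => [[E1 E2]|Ho].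
        by apply: Hne; rewrite E E1 E2.
      apply: (Hmax q Hq); first by exists mu, n'; split.
      by exists eta, n, mu, n'.
    have [e [He Hne']] : exists e, List.In e u /\ forall l, mu l <> e.
      apply: NNPP => H; apply: Hcov => y Hy; apply: NNPP => H'; apply: H; exists y; split=> //.
      by move=> l El; apply: H'; exists l.
    apply: (cg_notA Weta (n := n)); apply: (Arelv (nu := mu) (n := n') (e := e)) => // l.
    case: (Hin l) => [?|?]; [by left|by right; split].
  have : SL L (cg eta n) = 0 by apply: Hh; left; exists eta, n.
  by rewrite Hc mulrN1 => /eqP; rewrite oppr_eq0 => /eqP.
move=> g HgA; rewrite /SL big1_In // => q Hq _.
move: (Hv q Hq); case E: q.2 => [g'|mu n'] Hval /=.
  by rewrite delta_neq ?mulr0 // => Eg; subst g'.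
case: (classic (relv a mu n' g = 0)) => [->|Hnz]; first by rewrite mulr0.
exfalso.
have Hin : forall l, U (mu l) \/ List.In (mu l) u.
  apply: NNPP => Ho; apply: Hnout; exists q; split=> //; exists mu, n'; by split.
have [e [He Hne']] : exists e, List.In e u /\ forall l, mu l <> e.
  apply: NNPP => H; apply: HnW; exists q; split=> //; exists mu, n'; split=> //.
  split=> //; split=> // y Hy; apply: NNPP => H'; apply: H; exists y; split=> //.
  by move=> l El; apply: H'; exists l.
apply: HgA; apply: (Arelv (nu := mu) (n := n') (e := e)) => // l.
case: (Hin l) => [?|?]; [by left|by right; split].
Qed.


Lemma coef_zero (l : seq (int * Ity)) (i : Ity) : ~ List.In i (map snd l) ->
  \sum_(p <- l) p.1 * bas p.2 (proj1_sig i) = 0.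
Proof.
move=> Hn; apply: big1_In => p Hp _; rewrite /bas delta_neq ?mulr0 // => E.
apply: Hn; rewrite (sig_val_inj E); by apply: List.in_map.
Qed.

Lemma coef_nodup (l : seq (int * Ity)) p : List.NoDup (map snd l) -> List.In p l ->
  \sum_(p' <- l) p'.1 * bas p'.2 (proj1_sig p.2) = p.1.
Proof.
elim: l => [//|p1 l IH] /= Hnd Hin; rewrite big_cons.
have [Hn1 Hnd'] : ~ List.In p1.2 (map snd l) /\ List.NoDup (map snd l).
  by inversion Hnd.
case: Hin => [<-|Hin].
  by rewrite /bas delta_eq mulr1 coef_zero // addr0.
rewrite IH // /bas delta_neq ?mulr0 ?add0r // => E.
apply: Hn1; rewrite -(sig_val_inj E); by apply: List.in_map.
Qed.

Theorem alg_free : free_quot (Gsub Lam a (gensU Lam (fun nu => U nu \/ List.In nu u)))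
                             (Gsub Lam a (gensUu Lam U u)).
Proof.
exists Ity, bas; split.
  move=> i; apply: span_gen; left; apply/gensU_iff; exists (proj1_sig i); split=> //.
  by case: (proj2_sig i).
split; first exact: spanning.
move=> l Hnd Hl p Hp.
case: (H2_items Hl) => L [Hv E].
have Hz := @indep_core (size L) L (leqnn _) Hv.
have H0 : forall g, chosen g \/ outy g -> SL L g = 0.
  move=> g Hg; rewrite -E; apply: big1_In => q Hq _.
  rewrite /bas delta_neq ?mulr0 // => Eg.
  case: (proj2_sig q.2) => HT [_ Hnc]; rewrite -Eg in HT Hnc.
  case: Hg => [Hc'|[nu [n [Egy Ho]]]]; first exact: Hnc Hc'.
  subst g; rewrite Egy in HT.
  case: HT => [E0|[[eta [n' [_ [Hc [E1 _]]]]]|[eta [m [n' [_ [_ E0]]]]]]]; try discriminate.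
  by subst; apply: Ho.
have := Hz H0 (proj1_sig p.2) (proj1 (proj2 (proj2_sig p.2))).
by rewrite -E coef_nodup.
Qed.

End Alg.

Lemma free_quot_ext k S (H1 H2 H1' H2' : vect k S -> Prop) :
  (forall v, H1 v <-> H1' v) -> (forall v, H2 v <-> H2' v) ->
  free_quot H1 H2 -> free_quot H1' H2'.
Proof.
move=> E1 E2 [I [b [Hb [Hs Hi]]]]; exists I, b; split; first by move=> i; apply/E1.
split; first by move=> v /E1 /Hs [l Hl]; exists l; apply/E2.
by move=> l Hnd /E2; apply: Hi.
Qed.

Lemma Gsub_ext k S Lam a (P Q : vect k S -> Prop) : (forall v, P v <-> Q v) ->
  forall v, Gsub Lam a P v <-> Gsub Lam a Q v.
Proof.
move=> E v; split; apply: span_ext => w [H|H]; (try by right); left; by apply/E.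
Qed.

Lemma main_free k S (Lam : wseq k S -> Prop) (a : wseq k S -> nat -> int) n U u :
  (size u + n <= k)%N -> (forall y, List.In y u -> ~ U y) -> card_le_aleph n U ->
  free_quot (Gsub Lam a (gensU Lam (fun nu => U nu \/ List.In nu u)))
            (Gsub Lam a (gensUu Lam U u)).
Proof.
move=> Hs Hd Hc; case: (comb Lam Hs Hd Hc) => lt Hg.
exact: (alg_free a Hd Hg).
Qed.

Theorem claim1p12 (k : nat) (S : Type) (Lam : wseq k S -> Prop)
    (a : wseq k S -> nat -> int) :
  (forall (U : (nat -> S) -> Prop) (u : seq (nat -> S)) (j : nat),
      List.NoDup u ->
      (forall eta, List.In eta u -> ~ U eta) ->
      (j <= k)%N ->
      (size u <= j)%N ->
      card_le_aleph (k - j) U ->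
      free_quot (Gsub Lam a (gensU Lam (fun nu => U nu \/ List.In nu u)))
                (Gsub Lam a (gensUu Lam U u))) /\
  (forall U : (nat -> S) -> Prop,
      card_le_aleph k U ->
      free_quot (Gsub Lam a (gensU Lam U)) (Gsub Lam a (fun _ => False))).
Proof.
split.
  move=> U u j _ Hd Hjk Hsu Hc; apply: (@main_free k S Lam a (k - j)%N U u) => //.
  apply: (@leq_trans (j + (k - j))%N); first by rewrite leq_add2r.
  by rewrite subnKC.
move=> U Hc.
have := @main_free k S Lam a k U [::] (leqnn _) (fun _ H => match H with end) Hc.
apply: free_quot_ext.
  apply: Gsub_ext => v; split; case=> [->|[[eta [n [L [H E]]]]|[eta [m [n [L [H E]]]]]]].
  - by left.
  - right; left; exists eta, n; split=> //; split=> // l; by case: (H l).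
  - right; right; exists eta, m, n; split=> //; split=> // l; by case: (H l).
  - by left.
  - right; left; exists eta, n; split=> //; split=> // l; by left.
  - right; right; exists eta, m, n; split=> //; split=> // l; by left.
apply: Gsub_ext => v; split=> [[eta [[] _]]|[]].
Qed.
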